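(* Let $\gamma(t)$ be a curve on $S^{n-1}$, put $\omega=\frac1\varepsilon\gamma\wedge\dot\gamma$, and suppose there is $\lambda_0(t)\in so(n)$ orthogonal to $\mathbb R^n\wedge\gamma$ such that $$\frac{d}{dt}(\mathbf I\omega)=[\mathbf I\omega,\omega]+[\kappa,\omega]+\lambda_0,\qquad \dot\gamma=-\varepsilon\omega\gamma.$$ Then for all $t$ and all $\delta\gamma\in T_\gamma S^{n-1}$, $$\delta l-\mathbf{JK}(\dot\gamma,\delta\gamma)=\Big\langle\frac1{\varepsilon^2}\mathbf I(\gamma\wedge\ddot\gamma)\gamma+\frac1{\varepsilon^3}\mathbf I(\gamma\wedge\dot\gamma)\dot\gamma,\delta\gamma\Big\rangle=\mathbf f(\dot\gamma,\delta\gamma),$$ where $\delta l=\big\langle\frac{\partial l}{\partial\gamma}-\frac d{dt}\frac{\partial l}{\partial\dot\gamma},\delta\gamma\big\rangle$ and $\mathbf f(\dot\gamma,\delta\gamma)=\frac1{\varepsilon^2}\langle\dot\gamma,\kappa\delta\gamma\rangle$.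
   Context: Model of a balanced $n$-dimensional ball with a gyroscope rolling without slipping and twisting over a fixed sphere in $\mathbb R^n$ ($n\ge3$): the ball has radius $a$, mass $m$, $D=ma^2$; the sphere has radius $b$; $\varepsilon=b/(b+a)$ (ball outside the sphere) or $\varepsilon=b/(b-a)$ (ball inside the sphere, or spherical shell over a smaller sphere). On $so(n)$ use $\langle X,Y\rangle=-\frac12\operatorname{tr}(XY)$; on $\mathbb R^n$ the Euclidean product. For $x,y\in\mathbb R^n$, $x\wedge y=xy^T-yx^T\in so(n)$. $\mathbb I\colon so(n)\to so(n)$ is the inertia operator of the system and $\mathbf I=\mathbb I+D\,\mathrm{Id}_{so(n)}$, a symmetric positive definite operator; $\kappa\in so(n)$ is a fixed matrix (the gyroscope). The reduced Lagrangian on $TS^{n-1}$ is $l(\gamma,\dot\gamma)=-\frac1{2\varepsilon^2}\langle\mathbf I(\gamma\wedge\dot\gamma)\gamma,\dot\gamma\rangle$ and the $\mathbf{JK}$-term is $\mathbf{JK}(\dot\gamma,\delta\gamma)=\frac{2\varepsilon-1}{\varepsilon^3}\langle\mathbf I(\gamma\wedge\dot\gamma)\dot\gamma,\delta\gamma\rangle$. *)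

(* Defs.v *)
From mathcomp Require Import all_boot all_order all_algebra.
From mathcomp Require Import all_classical all_reals all_analysis.
Set Implicit Arguments. Unset Strict Implicit. Unset Printing Implicit Defensive.
Import Order.TTheory GRing.Theory Num.Theory.
Local Open Scope ring_scope.

(* Vectors of R^n are column vectors 'cV[R]_n, elements of so(n) are
   in_so-symmetric matrices in 'M[R]_n. *)

Definition wedge (R : realType) (n : nat) (x y : 'cV[R]_n) : 'M[R]_n :=
  x *m y^T - y *m x^T.

Definition dotv (R : realType) (n : nat) (x y : 'cV[R]_n) : R :=
  \sum_(i < n) x i 0 * y i 0.

Definition so_inner (R : realType) (n : nat) (X Y : 'M[R]_n) : R :=
  - (2%:R^-1 * \tr (X *m Y)).

Definition in_so (R : realType) (n : nat) (X : 'M[R]_n) : Prop := X^T = - X.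

Definition lie (R : realType) (n : nat) (X Y : 'M[R]_n) : 'M[R]_n :=
  X *m Y - Y *m X.

Definition cderive (R : realType) (n : nat) (f : R -> 'cV[R]_n) (t : R)
  : 'cV[R]_n := \col_i derive1 (fun s => f s i 0) t.
Definition mderive (R : realType) (n : nat) (f : R -> 'M[R]_n) (t : R)
  : 'M[R]_n := \matrix_(i, j) derive1 (fun s => f s i j) t.

Definition cdifferentiable (R : realType) (n : nat) (f : R -> 'cV[R]_n) : Prop :=
  forall (t : R) (i : 'I_n), derivable (fun s => f s i 0) t 1.

Definition grad (R : realType) (n : nat) (F : 'cV[R]_n -> R) (x : 'cV[R]_n)
  : 'cV[R]_n := \col_j derive1 (fun s => F (x + s *: delta_mx j 0)) 0.

Definition boldI (R : realType) (n : nat) (II : 'M[R]_n -> 'M[R]_n) (D : R)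
  (X : 'M[R]_n) : 'M[R]_n := II X + D *: X.

Definition lagr (R : realType) (n : nat) (eps : R) (I : 'M[R]_n -> 'M[R]_n)
  (x v : 'cV[R]_n) : R :=
  - ((2%:R * eps ^+ 2)^-1 * dotv (I (wedge x v) *m x) v).

Definition JK (R : realType) (n : nat) (eps : R) (I : 'M[R]_n -> 'M[R]_n)
  (x v dx : 'cV[R]_n) : R :=
  (2%:R * eps - 1) / eps ^+ 3 * dotv (I (wedge x v) *m v) dx.

Definition gyro_f (R : realType) (n : nat) (eps : R) (kappa : 'M[R]_n)
  (v dx : 'cV[R]_n) : R :=
  (eps ^+ 2)^-1 * dotv v (kappa *m dx).

(* delta l = < dl/dgamma - d/dt dl/dgammadot , dgamma > along the curve gamma at time t,
   partial derivatives taken in the ambient R^n x R^n *)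
Definition delta_l (R : realType) (n : nat) (eps : R) (I : 'M[R]_n -> 'M[R]_n)
  (gamma : R -> 'cV[R]_n) (t : R) (dx : 'cV[R]_n) : R :=
  dotv (grad (fun x => lagr eps I x (cderive gamma t)) (gamma t)
        - cderive (fun s => grad (fun v => lagr eps I (gamma s) v)
                                  (cderive gamma s)) t) dx.

(* Main.v *)
Require Import Defs.
From mathcomp Require Import all_boot all_order all_algebra.
From mathcomp Require Import all_classical all_reals all_analysis.
From mathcomp Require Import ring lra.
Import Order.TTheory GRing.Theory Num.Theory.
Local Open Scope ring_scope.
Set Implicit Arguments. Unset Strict Implicit.


Section HDsec.
Variable R : realType.

Definition HD p q (f : R -> 'M[R]_(p,q)) (t : R) (F : 'M[R]_(p,q)) :=
  forall i j, is_derive t (1:R) (fun s => f s i j) (F i j).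

Lemma HD_cst p q (A : 'M[R]_(p,q)) t : HD (fun _ => A) t 0.
Proof. move=> i j; rewrite mxE; exact: is_derive_cst. Qed.

Lemma isd_ext (f g : R -> R) t d :
  (forall s, f s = g s) -> is_derive t (1:R) f d -> is_derive t (1:R) g d.
Proof. by move=> e; rewrite (funext e). Qed.

Lemma HD_add p q (f g : R -> 'M[R]_(p,q)) t F G :
  HD f t F -> HD g t G -> HD (fun s => f s + g s) t (F + G).
Proof.
move=> hf hg i j; rewrite mxE.
apply: (isd_ext _ (is_deriveD (hf i j) (hg i j))) => s /=; by rewrite mxE.
Qed.

Lemma isd_M (f g : R -> R) t df dg :
  is_derive t (1:R) f df -> is_derive t (1:R) g dg ->
  is_derive t (1:R) (fun s => f s * g s) (df * g t + f t * dg).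
Proof.
move=> hf hg; have := is_deriveM hf hg.
move=> h; have h2 := isd_ext (g := fun s => f s * g s) (fun s => erefl) h.
rewrite (_ : df * g t + f t * dg = f t *: dg + g t *: df); first exact: h2.
change (df * g t + f t * dg = f t * dg + g t * df :> R).
by rewrite addrC [g t * _]mulrC.
Qed.

Lemma isd_sum k (h : 'I_k -> R -> R) t dh :
  (forall i, is_derive t (1:R) (h i) (dh i)) ->
  is_derive t (1:R) (fun s => \sum_(i < k) h i s) (\sum_(i < k) dh i).
Proof.
move=> H; apply: (isd_ext _ (is_derive_sum H)) => s.
by rewrite fct_sumE.
Qed.

Lemma HD_opp p q (f : R -> 'M[R]_(p,q)) t F :
  HD f t F -> HD (fun s => - f s) t (- F).
Proof.
move=> hf i j; rewrite mxE.
apply: (isd_ext _ (is_deriveN (hf i j))) => s /=; by rewrite mxE.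
Qed.

Lemma HD_sub p q (f g : R -> 'M[R]_(p,q)) t F G :
  HD f t F -> HD g t G -> HD (fun s => f s - g s) t (F - G).
Proof. by move=> hf hg; apply: HD_add => //; apply: HD_opp. Qed.

Lemma HD_scale p q (c : R) (f : R -> 'M[R]_(p,q)) t F :
  HD f t F -> HD (fun s => c *: f s) t (c *: F).
Proof.
move=> hf i j; rewrite mxE.
apply: (isd_ext _ (is_deriveZ c (hf i j))) => s /=; by rewrite mxE.
Qed.

Lemma HD_mul p q r (f : R -> 'M[R]_(p,q)) (g : R -> 'M[R]_(q,r)) t F G :
  HD f t F -> HD g t G -> HD (fun s => f s *m g s) t (F *m g t + f t *m G).
Proof.
move=> hf hg i j; rewrite !mxE -big_split /=.
apply: (isd_ext (f := fun s => \sum_(k < q) f s i k * g s k j)).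
  by move=> s; rewrite mxE.
apply: isd_sum => k; exact: isd_M.
Qed.

Lemma HD_tr p q (f : R -> 'M[R]_(p,q)) t F :
  HD f t F -> HD (fun s => (f s)^T) t F^T.
Proof.
move=> hf i j; rewrite mxE.
apply: (isd_ext _ (hf j i)) => s /=; by rewrite mxE.
Qed.

Lemma HD_lin p q p' q' (L : {linear 'M[R]_(p,q) -> 'M[R]_(p',q')})
  (f : R -> 'M[R]_(p,q)) t F :
  HD f t F -> HD (fun s => L (f s)) t (L F).
Proof.
move=> hf i j.
have E : forall X : 'M[R]_(p,q), L X i j =
   \sum_(k < p) \sum_(l < q) X k l * L (delta_mx k l) i j.
  move=> X; rewrite {1}(matrix_sum_delta X) linear_sum summxE.
  apply: eq_bigr => k _; rewrite linear_sum summxE.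
  by apply: eq_bigr => l _; rewrite linearZ mxE.
rewrite E; apply: (isd_ext (f := fun s => \sum_(k < p) \sum_(l < q) f s k l * L (delta_mx k l) i j)).
  by move=> s; rewrite E.
apply: isd_sum => k; apply: isd_sum => l.
have := isd_M (hf k l) (is_derive_cst (L (delta_mx k l) i j) t 1).
by rewrite mulr0 addr0.
Qed.

Lemma HD_line p q (x e : 'M[R]_(p,q)) t :
  HD (fun s => x + s *: e) t e.
Proof.
move=> i j.
apply: (isd_ext (f := fun s => x i j + s * e i j)).
  by move=> s; rewrite !mxE.
have := is_deriveD (is_derive_cst (x i j) t 1) (isd_M (is_derive_id t 1) (is_derive_cst (e i j) t 1)).
by rewrite add0r mulr0 addr0 mul1r.
Qed.

End HDsec.

Section Alg.
Variables (R : realType) (n : nat).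
Implicit Types (x y z v : 'cV[R]_n) (A B : 'M[R]_n).

Lemma dotvE x y : dotv x y = (x^T *m y) 0 0.
Proof. by rewrite /dotv mxE; apply: eq_bigr => i _; rewrite mxE. Qed.

Lemma dotvC x y : dotv x y = dotv y x.
Proof. by rewrite /dotv; apply: eq_bigr => i _; rewrite mulrC. Qed.

Lemma dotvDl x y z : dotv (x + y) z = dotv x z + dotv y z.
Proof. by rewrite /dotv -big_split; apply: eq_bigr => i _; rewrite mxE mulrDl. Qed.

Lemma dotvZl (c : R) x z : dotv (c *: x) z = c * dotv x z.
Proof. by rewrite /dotv mulr_sumr; apply: eq_bigr => i _; rewrite mxE mulrA. Qed.

Lemma dotvNl x z : dotv (- x) z = - dotv x z.
Proof. by rewrite -scaleN1r dotvZl mulN1r. Qed.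

Lemma dotvBl x y z : dotv (x - y) z = dotv x z - dotv y z.
Proof. by rewrite dotvDl dotvNl. Qed.

Lemma dotv_delta x (j : 'I_n) : dotv x (delta_mx j 0) = x j 0.
Proof.
rewrite /dotv (bigD1 j) //= big1 ?addr0; first by rewrite mxE !eqxx mulr1.
by move=> i /negbTE ne; rewrite mxE ne mulr0.
Qed.

Lemma trmul_scalar x y : x^T *m y = (dotv x y)%:M.
Proof. by apply/matrixP => i j; rewrite !ord1 dotvE [RHS]mxE eqxx mulr1n. Qed.

Lemma wedge_mul x y z : wedge x y *m z = dotv y z *: x - dotv x z *: y.
Proof.
by rewrite /wedge mulmxBl -!mulmxA !trmul_scalar !mul_mx_scalar.
Qed.

Lemma skew_dot A x y : in_so A -> dotv (A *m x) y = - dotv x (A *m y).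
Proof.
move=> hA; rewrite !dotvE trmx_mul hA mulmxN mulNmx -mulmxA.
by rewrite mxE.
Qed.

Lemma skew_dot0 A x : in_so A -> dotv (A *m x) x = 0.
Proof.
move=> hA; have h := skew_dot x x hA; rewrite [dotv x _]dotvC in h.
lra.
Qed.

Lemma tr1 (M : 'M[R]_1) : \tr M = M 0 0.
Proof. by rewrite /mxtrace big_ord1. Qed.

Lemma so_dot A x v : in_so A -> dotv v (A *m x) = - so_inner A (wedge x v).
Proof.
move=> hA; rewrite /so_inner /wedge mulmxBr linearB /=.
rewrite !mulmxA mxtrace_mulC tr1 -dotvE.
rewrite [\tr (A *m v *m x^T)]mxtrace_mulC tr1 -dotvE.
rewrite [dotv x (A *m v)]dotvC skew_dot //.
rewrite [dotv (v) (A *m x)]dotvC.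
by field.
Qed.

Lemma so_innerC A B : so_inner A B = so_inner B A.
Proof. by rewrite /so_inner mxtrace_mulC. Qed.

Lemma so_innerNr A B : so_inner A (- B) = - so_inner A B.
Proof. by rewrite /so_inner mulmxN linearN /= mulrN. Qed.

Lemma wedge_so x y : in_so (wedge x y).
Proof. by rewrite /in_so /wedge linearB /= !trmx_mul !trmxK opprB. Qed.

Lemma wedgeC x y : wedge x y = - wedge y x.
Proof. by rewrite /wedge opprB. Qed.

Lemma wedgexx x : wedge x x = 0.
Proof. by rewrite /wedge subrr. Qed.

End Alg.

Section Bridge.
Variable R : realType.

Lemma HD_ext p q (f g : R -> 'M[R]_(p,q)) t F :
  (forall s, f s = g s) -> HD f t F -> HD g t F.
Proof. by move=> e; rewrite (funext e). Qed.

Lemma HD_eq p q (f : R -> 'M[R]_(p,q)) t F G : HD f t F -> F = G -> HD f t G.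
Proof. by move=> h <-. Qed.

Lemma HD_wedge n (f g : R -> 'cV[R]_n) t F G :
  HD f t F -> HD g t G ->
  HD (fun s => wedge (f s) (g s)) t (wedge F (g t) + wedge (f t) G).
Proof.
move=> hf hg; rewrite /wedge.
apply: HD_eq; first exact: HD_sub (HD_mul hf (HD_tr hg)) (HD_mul hg (HD_tr hf)).
by rewrite /= opprD [RHS]addrACA [- (g t *m _) + _]addrC.
Qed.

Lemma HD_cder n (g : R -> 'cV[R]_n) t : cdifferentiable g -> HD g t (cderive g t).
Proof.
move=> hg i j; rewrite (ord1 j) mxE derive1E; exact: derivableP.
Qed.

Lemma cderive_HD n (f : R -> 'cV[R]_n) t F : HD f t F -> cderive f t = F.
Proof.
move=> h; apply/matrixP => i j; rewrite (ord1 j) mxE derive1E.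
by have [_ ->] := h i 0.
Qed.

Lemma mderive_HD n (f : R -> 'M[R]_n) t F : HD f t F -> mderive f t = F.
Proof.
move=> h; apply/matrixP => i j; rewrite mxE derive1E.
by have [_ ->] := h i j.
Qed.

Lemma derive1_HD (f : R -> 'M[R]_1) t F : HD f t F ->
  derive1 (fun s => f s 0 0) t = F 0 0.
Proof. by move=> h; rewrite derive1E; have [_ ->] := h 0 0. Qed.

End Bridge.

Lemma wedge0r (R : realType) n (x : 'cV[R]_n) : wedge x 0 = 0.
Proof. by rewrite /wedge trmx0 mulmx0 mul0mx subrr. Qed.
Lemma wedge0l (R : realType) n (x : 'cV[R]_n) : wedge 0 x = 0.
Proof. by rewrite /wedge trmx0 mulmx0 mul0mx subrr. Qed.
Lemma dotv0r (R : realType) n (x : 'cV[R]_n) : dotv x 0 = 0.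
Proof. by rewrite /dotv big1 // => i _; rewrite mxE mulr0. Qed.

Lemma entry00 (R : realType) (c : R) (A B : 'M[R]_1) : (c *: (A + B)) 0 0 = c * (A 0 0 + B 0 0).
Proof. by rewrite !mxE. Qed.

Section Lagr.
Variables (R : realType) (n : nat) (I : 'M[R]_n -> 'M[R]_n) (eps : R).
Hypothesis IHD : forall (f : R -> 'M[R]_n) t F, HD f t F -> HD (fun s => I (f s)) t (I F).
Hypothesis Iso : forall X, in_so X -> in_so (I X).
Hypothesis Isym : forall X Y, in_so X -> in_so Y -> so_inner (I X) Y = so_inner X (I Y).
Hypothesis I0 : forall X, I (X + 0) = I X.
Hypothesis eps0 : eps != 0.

Lemma lagr_HD (xf vf : R -> 'cV[R]_n) t X V :
  HD xf t X -> HD vf t V ->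
  derive1 (fun s => lagr eps I (xf s) (vf s)) t =
  - ((2%:R * eps ^+ 2)^-1 *
     (dotv (I (wedge X (vf t) + wedge (xf t) V) *m xf t
            + I (wedge (xf t) (vf t)) *m X) (vf t)
      + dotv (I (wedge (xf t) (vf t)) *m xf t) V)).
Proof.
move=> hx hv.
pose M s := (- (2%:R * eps ^+ 2)^-1) *:
   ((I (wedge (xf s) (vf s)) *m xf s)^T *m vf s).
rewrite (_ : (fun s => lagr eps I (xf s) (vf s)) = fun s => M s 0 0); last first.
  by apply: funext => s; rewrite /M /lagr mxE dotvE mulNr.
rewrite (derive1_HD (HD_scale _ (HD_mul (HD_tr (HD_mul (IHD (HD_wedge hx hv)) hx)) hv))).
by rewrite entry00 -!dotvE mulNr.
Qed.

Lemma Isw x v e : dotv (I (wedge e v) *m x) v = dotv (I (wedge x v) *m e) v.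
Proof.
rewrite dotvC so_dot; last exact/Iso/wedge_so.
rewrite Isym; [|exact: wedge_so|exact: wedge_so]; rewrite so_innerC -so_dot; last exact/Iso/wedge_so.
by rewrite dotvC.
Qed.

Lemma Isw2 x v e : dotv (I (wedge x e) *m x) v = dotv (I (wedge x v) *m x) e.
Proof.
rewrite dotvC so_dot; last exact/Iso/wedge_so.
rewrite Isym; [|exact: wedge_so|exact: wedge_so]; rewrite so_innerC -so_dot; last exact/Iso/wedge_so.
by rewrite dotvC.
Qed.

Lemma grad_x x0 v :
  grad (fun x => lagr eps I x v) x0 = (eps ^+ 2)^-1 *: (I (wedge x0 v) *m v).
Proof.
apply/matrixP => j k; rewrite (ord1 k) [LHS]mxE [RHS]mxE.
rewrite (lagr_HD (HD_line x0 (delta_mx j 0) 0) (HD_cst v 0)).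
rewrite scale0r addr0 wedge0r I0 dotv0r addr0 dotvDl Isw skew_dot; last exact/Iso/wedge_so.
rewrite -dotv_delta dotvC; field.
exact: eps0.
Qed.

Lemma grad_v x v0 :
  grad (fun v => lagr eps I x v) v0 = - (eps ^+ 2)^-1 *: (I (wedge x v0) *m x).
Proof.
apply/matrixP => j k; rewrite (ord1 k) [LHS]mxE [RHS]mxE.
rewrite (lagr_HD (HD_cst x 0) (HD_line v0 (delta_mx j 0) 0)).
rewrite scale0r addr0 wedge0l add0r mulmx0 addr0 Isw2 -dotv_delta.
field.
exact: eps0.
Qed.

End Lagr.

Section Phi.
Variables (R : realType) (n : nat).
Implicit Types (X Y A B : 'M[R]_n) (g d : 'cV[R]_n).
Lemma phiD A B g d : dotv ((A + B) *m g) d = dotv (A *m g) d + dotv (B *m g) d.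
Proof. by rewrite mulmxDl dotvDl. Qed.
Lemma phiZ (c : R) A g d : dotv ((c *: A) *m g) d = c * dotv (A *m g) d.
Proof. by rewrite -scalemxAl dotvZl. Qed.
Lemma phi_lie X Y g d :
  dotv (lie X Y *m g) d = dotv (X *m (Y *m g)) d - dotv (Y *m (X *m g)) d.
Proof. by rewrite /lie mulmxBl dotvBl !mulmxA. Qed.
Lemma lieZl (c : R) X Y : lie (c *: X) Y = c *: lie X Y.
Proof. by rewrite /lie -scalemxAl -scalemxAr scalerBr. Qed.
Lemma lieZr (c : R) X Y : lie X (c *: Y) = c *: lie X Y.
Proof. by rewrite /lie -scalemxAl -scalemxAr scalerBr. Qed.
End Phi.

Section BI.
Variables (R : realType) (n : nat) (II : {linear 'M[R]_n -> 'M[R]_n}) (D : R).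

Lemma bI_HD (f : R -> 'M[R]_n) t F : HD f t F -> HD (fun s => boldI II D (f s)) t (boldI II D F).
Proof. by move=> h; apply: HD_add; [exact: HD_lin | exact: HD_scale]. Qed.

Lemma bI0 X : boldI II D (X + 0) = boldI II D X.
Proof. by rewrite addr0. Qed.

Lemma bIZ (c : R) X : boldI II D (c *: X) = c *: boldI II D X.
Proof. by rewrite /boldI linearZ scalerDr !scalerA mulrC. Qed.

Lemma bI_so (hII : forall X, in_so X -> in_so (II X)) X : in_so X -> in_so (boldI II D X).
Proof.
move=> hX; rewrite /in_so /boldI linearD /= linearZ /= hX (hII _ hX).
by rewrite opprD scalerN.
Qed.
End BI.

Theorem proposition7p3
  (R : realType) (n : nat) (hn : (3 <= n)%N)
  (a m b eps : R) (ha : 0 < a) (hm : 0 < m) (hb : 0 < b)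
  (heps : eps = b / (b + a) \/ (b != a /\ eps = b / (b - a)))
  (II : {linear 'M[R]_n -> 'M[R]_n})
  (hII : forall X : 'M[R]_n, in_so X -> in_so (II X))
  (hsym : forall X Y : 'M[R]_n, in_so X -> in_so Y ->
     so_inner (boldI II (m * a ^+ 2) X) Y = so_inner X (boldI II (m * a ^+ 2) Y))
  (hpos : forall X : 'M[R]_n, in_so X -> X != 0 ->
     0 < so_inner (boldI II (m * a ^+ 2) X) X)
  (kappa : 'M[R]_n) (hkappa : in_so kappa)
  (gamma : R -> 'cV[R]_n)
  (hsphere : forall t, dotv (gamma t) (gamma t) = 1)
  (hdiff1 : cdifferentiable gamma)
  (hdiff2 : cdifferentiable (cderive gamma))
  (hdyn : forall t : R, exists lambda0 : 'M[R]_n,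
     [/\ in_so lambda0,
         (forall x : 'cV[R]_n, so_inner lambda0 (wedge x (gamma t)) = 0)
       & mderive (fun s => boldI II (m * a ^+ 2)
                   (eps^-1 *: wedge (gamma s) (cderive gamma s))) t
         = lie (boldI II (m * a ^+ 2) (eps^-1 *: wedge (gamma t) (cderive gamma t)))
               (eps^-1 *: wedge (gamma t) (cderive gamma t))
           + lie kappa (eps^-1 *: wedge (gamma t) (cderive gamma t))
           + lambda0])
  (hconstr : forall t : R, cderive gamma t
     = - eps *: ((eps^-1 *: wedge (gamma t) (cderive gamma t)) *m gamma t)) :
  forall (t : R) (dgamma : 'cV[R]_n), dotv dgamma (gamma t) = 0 ->
    delta_l eps (boldI II (m * a ^+ 2)) gamma t dgamma
      - JK eps (boldI II (m * a ^+ 2)) (gamma t) (cderive gamma t) dgamma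
    = dotv ((eps ^+ 2)^-1 *: (boldI II (m * a ^+ 2)
               (wedge (gamma t) (cderive (cderive gamma) t)) *m gamma t)
            + (eps ^+ 3)^-1 *: (boldI II (m * a ^+ 2)
               (wedge (gamma t) (cderive gamma t)) *m cderive gamma t)) dgamma
    /\
    dotv ((eps ^+ 2)^-1 *: (boldI II (m * a ^+ 2)
               (wedge (gamma t) (cderive (cderive gamma) t)) *m gamma t)
            + (eps ^+ 3)^-1 *: (boldI II (m * a ^+ 2)
               (wedge (gamma t) (cderive gamma t)) *m cderive gamma t)) dgamma
    = gyro_f eps kappa (cderive gamma t) dgamma.
Proof.
move=> t dg hdg.
have eps0 : eps != 0.
  case: heps => [->|[hba ->]].
    by apply: mulf_neq0; [exact: lt0r_neq0 | rewrite invr_eq0; apply: lt0r_neq0; exact: addr_gt0].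
  by apply: mulf_neq0; [exact: lt0r_neq0 | rewrite invr_eq0 subr_eq0].
have h1 : forall s, HD gamma s (cderive gamma s) by move=> s; exact: HD_cder.
have h2 : forall s, HD (cderive gamma) s (cderive (cderive gamma) s) by move=> s; exact: HD_cder.
have IHD := @bI_HD R n II (m * a ^+ 2).
have Iso := bI_so (m * a ^+ 2) hII.
have I0 := @bI0 R n II (m * a ^+ 2).
split.
  rewrite /delta_l (grad_x IHD Iso hsym I0 eps0).
  rewrite (_ : (fun s => grad (fun v => lagr eps (boldI II (m * a ^+ 2)) (gamma s) v) (cderive gamma s))
     = fun s => - (eps ^+ 2)^-1 *: (boldI II (m * a ^+ 2) (wedge (gamma s) (cderive gamma s)) *m gamma s)); last first.
    by apply: funext => s; rewrite (grad_v IHD Iso hsym eps0).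
  rewrite (cderive_HD (HD_scale _ (HD_mul (IHD _ _ _ (HD_wedge (h1 t) (h2 t))) (h1 t)))).
  rewrite wedgexx add0r /JK.
  rewrite !(dotvBl, dotvDl, dotvZl, dotvNl).
  by field.
have [l0 [hl0 hl0o hder]] := hdyn t.
rewrite (mderive_HD (IHD _ _ _ (HD_scale _ (HD_wedge (h1 t) (h2 t))))) in hder.
rewrite wedgexx add0r !bIZ in hder.
set g0 := gamma t in hdg hder hl0o *.
set g1 := cderive gamma t in hder *.
set W := wedge g0 g1 in hder *.
set J := boldI II (m * a ^+ 2) W in hder *.
set Z := boldI II (m * a ^+ 2) (wedge g0 (cderive (cderive gamma) t)) in hder *.
have hZ : Z = eps *: (lie (eps^-1 *: J) (eps^-1 *: W) + lie kappa (eps^-1 *: W) + l0).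
  by rewrite -hder scalerA divff // scale1r.
have hWg : W *m g0 = - g1.
  have := hconstr t; rewrite -/g0 -/g1 -/W scalemxAl scalerA mulNr divff // scaleN1r.
  by move=> E; rewrite E ?mulNmx opprK.
have hWy : forall y, dotv (W *m y) dg = - (dotv g0 y * dotv g1 dg).
  move=> y; rewrite /W wedge_mul dotvBl !dotvZl [dotv g0 dg]dotvC hdg mulr0 sub0r.
  by [].
have hJ0 : dotv g0 (J *m g0) = 0 by rewrite dotvC skew_dot0 //; exact/Iso/wedge_so.
have hK0 : dotv g0 (kappa *m g0) = 0 by rewrite dotvC skew_dot0.
have hL0 : dotv (l0 *m g0) dg = 0.
  by rewrite dotvC so_dot // (wedgeC g0 dg) so_innerNr hl0o !oppr0.
rewrite hZ /gyro_f !lieZl !lieZr dotvDl !dotvZl phiZ (phiD (_ + _) l0) (phiD (_ *: _) (_ *: lie _ _)) !phiZ !phi_lie.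
rewrite hWg !mulmxN !hWy hJ0 hK0 hL0.
rewrite !(dotvNl, mulr0, mul0r, oppr0, subr0, addr0).
have hk : dotv g1 (kappa *m dg) = - dotv (kappa *m g1) dg.
  by rewrite (skew_dot g1 dg hkappa) opprK.
rewrite hk.
by field.
Qed.
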